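(* Let $(X,d)$ be a separable geodesic Gromov-hyperbolic space with basepoint $o$, and $\mu$ a countably supported non-elementary probability measure on $\mathrm{Isom}(X)$ with finite exponential moment. Let $v(\mu)=\sup_{\xi\in\overline X^h}\mathbb E[(\sigma_0(X_1,\xi)-\ell_\mu)^2]$. Then there exists $C>0$ such that for every $\epsilon>0$ there exists $b>0$ such that for every $\lambda$ with $|\lambda|<v(\mu)/b$, every $n\in\mathbb N$ and every $x\in\overline X^h$, $$\mathbb E\big[e^{\lambda(\sigma(L_n,x)-n\ell_\mu)}\big]\le\exp\Big(\frac{\lambda^2(v(\mu)+\epsilon)n}{2}+C|\lambda|\Big).$$
   Context: Gromov-hyperbolic: $\exists\delta\ge0$, $(x|y)_o\ge\min\{(x|z)_o,(z|y)_o\}-\delta$ with $(x|y)_o=\frac12(d(x,o)+d(y,o)-d(x,y))$; non-elementary: the semigroup generated by $\mathrm{supp}\,\mu$ contains two loxodromic isometries with disjoint fixed point pairs on the Gromov boundary; $\kappa(g)=d(g\cdot o,o)$, finite exponential moment: $\int e^{\alpha\kappa}d\mu<\infty$ for some $\alpha>0$. $\overline X^h$ is the horofunction compactification (closure of $\{h_x:m\mapsto d(x,m)-d(x,o)\}$ among 1-Lipschitz functions vanishing at $o$, pointwise convergence), action $(g\cdot h)(m)=h(g^{-1}m)-h(g^{-1}o)$, Busemann cocycle $\sigma(g,h)=h(g^{-1}o)$. $X_i$ i.i.d. with law $\mu$, $L_n=X_n\cdots X_1$, $\ell_\mu=\lim\kappa(L_n)/n$ a.s. $\sigma_0(g,x):=\sigma(g,x)+\psi(g\cdot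 x)-\psi(x)$ where $\psi:\overline X^h\to\mathbb R$ is a fixed bounded measurable function (known to exist) such that $\int\sigma_0(g,x)d\mu(g)=\ell_\mu$ for all $x$. *)

(* Defs.v *)
From HB Require Import structures.
From mathcomp Require Import all_boot all_order all_algebra.
From mathcomp Require Import all_classical all_reals all_analysis.
Set Implicit Arguments. Unset Strict Implicit. Unset Printing Implicit Defensive.
Import Order.TTheory GRing.Theory Num.Theory.
Import numFieldNormedType.Exports.
Local Open Scope classical_set_scope.
Local Open Scope ring_scope.

Definition is_metric (R : realType) (X : Type) (d : X -> X -> R) : Prop :=
  (forall x y, 0 <= d x y) /\ (forall x y, d x y = 0 <-> x = y) /\
  (forall x y, d x y = d y x) /\ (forall x y z, d x z <= d x y + d y z).

Definition separable_metric (R : realType) (X : Type) (d : X -> X -> R) : Prop :=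
  exists D : set X, countable D /\
    forall x (e : R), 0 < e -> exists2 y, D y & d x y < e.

Definition geodesic_metric (R : realType) (X : Type) (d : X -> X -> R) : Prop :=
  forall x y, exists gam : R -> X,
    gam 0 = x /\ gam (d x y) = y /\
    forall s t, 0 <= s <= d x y -> 0 <= t <= d x y -> d (gam s) (gam t) = `|s - t|.

Definition gprod (R : realType) (X : Type) (d : X -> X -> R) (o x y : X) : R :=
  (d x o + d y o - d x y) / 2.

Definition gromov_hyperbolic (R : realType) (X : Type) (d : X -> X -> R) (o : X) : Prop :=
  exists delta : R, 0 <= delta /\
    forall x y z, Num.min (gprod d o x z) (gprod d o z y) - delta <= gprod d o x y.

Record isom (R : realType) (X : Type) (d : X -> X -> R) := Isom {
  ifun : X -> X;
  iinv : X -> X;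
  ifunK : cancel ifun iinv;
  iinvK : cancel iinv ifun;
  ifun_dist : forall x y, d (ifun x) (ifun y) = d x y }.

HB.instance Definition _ (R : realType) (X : Type) (d : X -> X -> R) :=
  gen_eqMixin (isom d).
HB.instance Definition _ (R : realType) (X : Type) (d : X -> X -> R) :=
  gen_choiceMixin (isom d).

Definition kappa (R : realType) (X : Type) (d : X -> X -> R) (o : X) (g : isom d) : R :=
  d (ifun g o) o.

Lemma isom_comp_K (R : realType) (X : Type) (d : X -> X -> R) (g h : isom d) :
  cancel (ifun g \o ifun h) (iinv h \o iinv g).
Proof. by move=> x /=; rewrite ifunK ifunK. Qed.
Lemma isom_comp_VK (R : realType) (X : Type) (d : X -> X -> R) (g h : isom d) :
  cancel (iinv h \o iinv g) (ifun g \o ifun h).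
Proof. by move=> x /=; rewrite iinvK iinvK. Qed.
Lemma isom_comp_dist (R : realType) (X : Type) (d : X -> X -> R) (g h : isom d) x y :
  d ((ifun g \o ifun h) x) ((ifun g \o ifun h) y) = d x y.
Proof. by rewrite /= !ifun_dist. Qed.

(** group product g h (first h, then g) *)
Definition isom_mul (R : realType) (X : Type) (d : X -> X -> R) (g h : isom d) : isom d :=
  Isom (isom_comp_K g h) (isom_comp_VK g h) (isom_comp_dist g h).

Definition isom_id (R : realType) (X : Type) (d : X -> X -> R) : isom d :=
  @Isom R X d id id (fun _ => erefl) (fun _ => erefl) (fun _ _ => erefl).

Definition horo (R : realType) (X : Type) (d : X -> X -> R) (o x : X) : X -> R :=
  fun m => d x m - d x o.

(** closure of {h_x} for the topology of pointwise convergence on X -> R *)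
Definition horo_compact (R : realType) (X : Type) (d : X -> X -> R) (o : X) : set (X -> R) :=
  [set h | forall (F : set X) (e : R), finite_set F -> 0 < e ->
     exists x, forall m, F m -> `|h m - horo d o x m| < e].

Definition horo_act (R : realType) (X : Type) (d : X -> X -> R) (o : X)
  (g : isom d) (h : X -> R) : X -> R :=
  fun m => h (iinv g m) - h (iinv g o).

Definition busemann (R : realType) (X : Type) (d : X -> X -> R) (o : X)
  (g : isom d) (h : X -> R) : R := h (iinv g o).

Definition sigma0 (R : realType) (X : Type) (d : X -> X -> R) (o : X)
  (psi : (X -> R) -> R) (g : isom d) (h : X -> R) : R :=
  busemann o g h + psi (horo_act o g h) - psi h.

Definition supp (R : realType) (X : Type) (d : X -> X -> R) (mu : isom d -> R) : set (isom d) :=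
  [set g | mu g != 0].

Definition countably_supported_proba (R : realType) (X : Type) (d : X -> X -> R)
  (mu : isom d -> R) : Prop :=
  (forall g, 0 <= mu g) /\ countable (supp mu) /\
  (\esum_(g in [set: isom d]) (mu g)%:E = 1)%E.

Definition pexp (R : realType) (X : Type) (d : X -> X -> R) (mu : isom d -> R)
  (f : isom d -> \bar R) : \bar R :=
  \esum_(g in [set: isom d]) ((mu g)%:E * f g)%E.

Definition rexp (R : realType) (X : Type) (d : X -> X -> R) (mu : isom d -> R)
  (f : isom d -> R) : \bar R :=
  (pexp mu (fun g => (Num.max (f g) 0)%:E) - pexp mu (fun g => (Num.max (- f g) 0)%:E))%E.

(** E[f(L_n)] for nonnegative f, L_n = X_n ... X_1 with X_i i.i.d. of law mu *)
Fixpoint rw_exp (R : realType) (X : Type) (d : X -> X -> R) (mu : isom d -> R)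
  (n : nat) (f : isom d -> \bar R) : \bar R :=
  match n with
  | 0 => f (isom_id d)
  | n'.+1 => rw_exp mu n' (fun h => pexp mu (fun g => f (isom_mul g h)))
  end.

Definition finite_exp_moment (R : realType) (X : Type) (d : X -> X -> R) (o : X)
  (mu : isom d -> R) : Prop :=
  exists alpha : R, 0 < alpha /\
    (pexp mu (fun g => (expR (alpha * kappa o g))%:E) < +oo)%E.

Inductive in_semigroup (R : realType) (X : Type) (d : X -> X -> R) (S : set (isom d)) :
  isom d -> Prop :=
| sg_base g : S g -> in_semigroup S g
| sg_mul g h : in_semigroup S g -> in_semigroup S h -> in_semigroup S (isom_mul g h).

Definition loxodromic (R : realType) (X : Type) (d : X -> X -> R) (o : X) (g : isom d) : Prop :=
  exists tau : R, 0 < tau /\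
    (fun n : nat => d (iter n (ifun g) o) o / n%:R) @ \oo --> tau.

(** two sequences converging to infinity define the same Gromov boundary point *)
Definition same_boundary_point (R : realType) (X : Type) (d : X -> X -> R) (o : X)
  (x y : nat -> X) : Prop :=
  forall M : R, exists N : nat, forall n m, (N <= n)%N -> (N <= m)%N ->
    M <= gprod d o (x n) (y m).

(** the two fixed points g^{+} = lim g^n o and g^{-} = lim g^{-n} o on the Gromov boundary *)
Definition fix_seq (R : realType) (X : Type) (d : X -> X -> R) (o : X) (g : isom d)
  (b : bool) : nat -> X :=
  fun n => iter n (if b then ifun g else iinv g) o.

Definition non_elementary (R : realType) (X : Type) (d : X -> X -> R) (o : X)
  (mu : isom d -> R) : Prop :=
  exists g h : isom d,
    in_semigroup (supp mu) g /\ in_semigroup (supp mu) h /\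
    loxodromic o g /\ loxodromic o h /\
    forall b1 b2 : bool,
      ~ same_boundary_point d o (fix_seq o g b1) (fix_seq o h b2).

Definition is_drift (R : realType) (X : Type) (d : X -> X -> R) (o : X)
  (mu : isom d -> R) (l : R) : Prop :=
  (fun n : nat => ((n%:R)^-1)%:E * rw_exp mu n (fun g => (kappa o g)%:E))%E @ \oo
    --> l%:E.

Definition vmu (R : realType) (X : Type) (d : X -> X -> R) (o : X)
  (mu : isom d -> R) (psi : (X -> R) -> R) (l : R) : \bar R :=
  ereal_sup [set pexp mu (fun g => ((sigma0 o psi g xi - l) ^+ 2)%:E)
            | xi in horo_compact d o].

(* Main.v *)
Require Import Defs.
From HB Require Import structures.
From mathcomp Require Import all_boot all_order all_algebra.
From mathcomp Require Import all_classical all_reals all_analysis.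
From mathcomp Require Import ring lra.
Import Order.TTheory GRing.Theory Num.Theory.
Import numFieldNormedType.Exports.
Local Open Scope classical_set_scope.
Local Open Scope ring_scope.

Section ExpIneq.
Variable R : realType.

Lemma expR_mul_neg (c : R) : (1 - c) * expR c <= 1.
Proof.
have h1 := expR_ge1Dx (- c). have h2 := expRxMexpNx_1 c. have h3 := expR_gt0 c.
nra.
Qed.

Lemma expR_neg_taylor (y : R) : y <= 0 -> expR y <= 1 + y + y ^+ 2 / 2.
Proof.
move=> y0.
pose f := fun t : R => 1 + t + t ^+ 2 / 2 - expR t.
have df : forall t : R, is_derive t (1:R) f (1 + t - expR t).
  move=> t; rewrite /f; apply: is_derive_eq.
  rewrite !scaler0 !add0r -[t%:A]/(t * 1) mulr1 -[2^-1 *: _]/(2^-1 * _).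
  by field.
have cf : {within `[y, 0], continuous f}.
  apply: continuous_subspaceT => t.
  by apply/differentiable_continuous/derivable1_diffP; exact: ex_derive.
have [c /andP[] + + E] := MVT_segment y0 (fun t _ => df t) cf.
rewrite !bnd_simp => yc c0.
have hc := expR_ge1Dx c.
move: E; rewrite /f expR0 => E.
have : (1 + c - expR c) * (0 - y) <= 0 by apply: mulr_le0_ge0; lra.
move=> H; lra.
Qed.

Lemma expR_pos_taylor (y : R) : 0 <= y -> expR y <= 1 + y + y ^+ 2 / 2 * expR y.
Proof.
move=> y0.
pose f := fun t : R => 1 + t + t ^+ 2 / 2 * expR t - expR t.
have df : forall t : R, is_derive t (1:R) f (1 + (t ^+ 2 / 2 * expR t + t * expR t) - expR t).
  move=> t; rewrite /f; apply: is_derive_eq.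
  rewrite !scaler0 !add0r -[t%:A]/(t * 1) mulr1.
  rewrite /GRing.scale /=.
  by field.
have cf : {within `[0, y], continuous f}.
  apply: continuous_subspaceT => t.
  by apply/differentiable_continuous/derivable1_diffP; exact: ex_derive.
have [c /andP[] + + E] := MVT_segment y0 (fun t _ => df t) cf.
rewrite !bnd_simp => c0 cy.
have h1 := expR_mul_neg c. have h3 := expR_gt0 c.
have h4 : 0 <= c ^+ 2 / 2 * expR c by rewrite mulr_ge0 ?divr_ge0 ?sqr_ge0 ?expR_ge0.
move: E; rewrite /f expR0 => E.
have : 0 <= (1 + (c ^+ 2 / 2 * expR c + c * expR c) - expR c) * (y - 0).
  apply: mulr_ge0; last lra. nra.
move=> H; nra.
Qed.

Lemma expR_taylor (y : R) :
  expR y <= 1 + y + y ^+ 2 / 2 + `|y| ^+ 3 * expR `|y| / 2.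
Proof.
have [y0|y0] := leP 0 y.
  have := @expR_pos_taylor y y0. have := expR_mul_neg y. have := expR_gt0 y.
  rewrite ger0_norm // => h1 h2 h3.
  have h4 : 0 <= y ^+ 2 / 2 by apply: divr_ge0 => //; exact: sqr_ge0.
  nra.
have := @expR_neg_taylor y (ltW y0).
have : 0 <= `|y| ^+ 3 * expR `|y| / 2.
  by rewrite divr_ge0 ?mulr_ge0 ?exprn_ge0 ?expR_ge0.
lra.
Qed.

End ExpIneq.
Section EsumZ.
Variables (R : realType) (T : choiceType).
Local Open Scope ereal_scope.

Lemma esumZ_le (c : R) (a : T -> \bar R) : (0 <= c)%R -> (forall i, 0 <= a i) ->
  \esum_(i in [set: T]) (c%:E * a i) <= c%:E * \esum_(i in [set: T]) a i.
Proof.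
move=> c0 a0; apply: ge_ereal_sup => _ [X [finX XI]] <-.
rewrite -ge0_mule_fsumr //; apply: lee_wpmul2l; first by rewrite lee_fin.
by apply: ereal_sup_ubound; exists X.
Qed.

Lemma esumZ (c : R) (a : T -> \bar R) : (0 <= c)%R -> (forall i, 0 <= a i) ->
  \esum_(i in [set: T]) (c%:E * a i) = c%:E * \esum_(i in [set: T]) a i.
Proof.
move=> c0 a0; apply/eqP; rewrite eq_le esumZ_le //=.
have [->|cpos] := eqVneq c 0%R.
  by rewrite mul0e esum_ge0 // => i _; rewrite mul0e.
have cg : (0 < c)%R by rewrite lt_def cpos c0.
have ci : (0 <= c^-1)%R by rewrite invr_ge0.
have H := @esumZ_le (c^-1) (fun i => c%:E * a i) ci
  (fun i => mule_ge0 (x := c%:E) c0 (a0 i)).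
have E : \esum_(i in [set: T]) ((c^-1)%:E * (c%:E * a i)) = \esum_(i in [set: T]) a i.
  by apply: eq_esum => i _; rewrite muleA -EFinM mulVf // mul1e.
rewrite E in H.
have := lee_wpmul2l (x := c%:E) c0 H.
by rewrite muleA -EFinM divff // mul1e.
Qed.
End EsumZ.


Section MaxH.
Variable R : realType.
Lemma maxpE (x : R) : Num.max x 0 = (x + `|x|) / 2.
Proof. by rewrite maxr_absE addr0 subr0. Qed.
Lemma maxpn (x : R) : Num.max x 0 - Num.max (- x) 0 = x.
Proof. by rewrite !maxpE normrN; field. Qed.
Lemma maxp_ge0 (x : R) : 0 <= Num.max x 0.
Proof. have := ler_norm (- x); rewrite normrN maxpE => h; lra. Qed.
Lemma maxp_le (x : R) : `|Num.max x 0| <= `|x|.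
Proof.
rewrite (ger0_norm (maxp_ge0 x)) maxpE.
have := ler_norm (- x); have := ler_norm x; rewrite normrN; lra.
Qed.
End MaxH.
Arguments maxpE {R}. Arguments maxpn {R}. Arguments maxp_ge0 {R}. Arguments maxp_le {R}.

Section Main.
Variables (R : realType) (X : Type) (d : X -> X -> R) (o : X) (mu : isom d -> R).
Hypothesis mu0 : forall g, (0 <= mu g)%R.
Hypothesis mu1 : (\esum_(g in [set: isom d]) (mu g)%:E = 1)%E.
Local Open Scope ereal_scope.

Lemma pexp_ge0 f : (forall g, 0 <= f g) -> 0 <= pexp mu f.
Proof. by move=> f0; apply: esum_ge0 => g _; rewrite mule_ge0 ?lee_fin. Qed.

Lemma pexp_le f f' : (forall g, f g <= f' g) -> pexp mu f <= pexp mu f'.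
Proof. by move=> ff; apply: le_esum => g _; apply: lee_wpmul2l; rewrite ?lee_fin. Qed.

Lemma pexpD f f' : (forall g, 0 <= f g) -> (forall g, 0 <= f' g) ->
  pexp mu (fun g => f g + f' g) = pexp mu f + pexp mu f'.
Proof.
move=> f0 f'0; rewrite /pexp -esumD; last 2 first.
- by move=> g _; rewrite mule_ge0 ?lee_fin.
- by move=> g _; rewrite mule_ge0 ?lee_fin.
by apply: eq_esum => g _; rewrite ge0_muleDr.
Qed.

Lemma pexpZ (c : R) f : (0 <= c)%R -> (forall g, 0 <= f g) ->
  pexp mu (fun g => c%:E * f g) = c%:E * pexp mu f.
Proof.
move=> c0 f0; rewrite /pexp -esumZ //; last by move=> g; rewrite mule_ge0 ?lee_fin.
by apply: eq_esum => g _; rewrite muleCA.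
Qed.

Lemma pexp_cst (c : R) : (0 <= c)%R -> pexp mu (fun _ => c%:E) = c%:E.
Proof.
move=> c0; have -> : pexp mu (fun _ => c%:E) = pexp mu (fun _ => c%:E * 1).
  by apply: eq_esum => g _; rewrite mule1.
rewrite pexpZ //; rewrite /pexp.
by rewrite (eq_esum (b := fun g => (mu g)%:E)) ?mu1 ?mule1 // => g _; rewrite mule1.
Qed.


Definition integ (f : isom d -> R) := pexp mu (fun g => (`|f g|)%:E) < +oo.
Definition Nn (f : isom d -> R) : R := fine (pexp mu (fun g => (f g)%:E)).
Definition Ex (f : isom d -> R) : R :=
  (Nn (fun g => Num.max (f g) 0%R) - Nn (fun g => Num.max (- f g)%R 0%R))%R.

Lemma integ_le {f h} : (forall g, `|f g| <= `|h g|)%R -> integ h -> integ f.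
Proof.
move=> fh; apply: le_lt_trans; apply: pexp_le => g; rewrite lee_fin.
exact: fh.
Qed.

Lemma integ_add {f h} : integ f -> integ h -> integ (fun g => f g + h g)%R.
Proof.
move=> If Ih; rewrite /integ.
apply: (@le_lt_trans _ _ (pexp mu (fun g => (`|f g|)%:E + (`|h g|)%:E))).
  by apply: pexp_le => g; rewrite -EFinD lee_fin ler_normD.
by rewrite pexpD // ?lte_add_pinfty // => g; rewrite lee_fin.
Qed.

Lemma integ_scale c {f} : integ f -> integ (fun g => c * f g)%R.
Proof.
move=> If; rewrite /integ.
rewrite (_ : (fun g => _) = (fun g => (`|c|)%:E * (`|f g|)%:E)); last first.
  by apply: funext => g; rewrite normrM EFinM.
by rewrite pexpZ // ?lte_mul_pinfty // => g; rewrite lee_fin.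
Qed.

Lemma integ_cst c : integ (fun _ => c).
Proof. by rewrite /integ pexp_cst // ltry. Qed.

Lemma pexp_fin f : (forall g, 0 <= f g)%R -> integ f ->
  pexp mu (fun g => (f g)%:E) = (Nn f)%:E.
Proof.
move=> f0 If; rewrite /Nn fineK //.
rewrite ge0_fin_numE; last by apply: pexp_ge0 => g; rewrite lee_fin.
apply: le_lt_trans If; apply: pexp_le => g; rewrite lee_fin; exact: ler_norm.
Qed.

Lemma Nn_ge0 f : (forall g, 0 <= f g)%R -> (0 <= Nn f)%R.
Proof. by move=> f0; apply: fine_ge0; apply: pexp_ge0 => g; rewrite lee_fin. Qed.

Lemma Nn_add f h : (forall g, 0 <= f g)%R -> (forall g, 0 <= h g)%R ->
  integ f -> integ h -> Nn (fun g => f g + h g)%R = (Nn f + Nn h)%R.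
Proof.
move=> f0 h0 If Ih; apply: EFin_inj.
rewrite -pexp_fin; last exact: integ_add.
  by rewrite EFinD -!pexp_fin // -pexpD // => g; rewrite lee_fin.
by move=> g; rewrite addr_ge0.
Qed.

Lemma Nn_scale c f : (0 <= c)%R -> (forall g, 0 <= f g)%R -> integ f ->
  Nn (fun g => c * f g)%R = (c * Nn f)%R.
Proof.
move=> c0 f0 If; apply: EFin_inj.
rewrite -pexp_fin; last exact: integ_scale.
  by rewrite EFinM -!pexp_fin // -pexpZ // => g; rewrite lee_fin.
by move=> g; rewrite mulr_ge0.
Qed.

Lemma Nn_cst c : (0 <= c)%R -> Nn (fun _ => c) = c.
Proof. by move=> c0; rewrite /Nn pexp_cst. Qed.

Lemma integ_pos {f} : integ f -> integ (fun g => Num.max (f g) 0%R).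
Proof. by apply: integ_le => g; apply: maxp_le. Qed.

Lemma integ_neg {f} : integ f -> integ (fun g => Num.max (- f g)%R 0%R).
Proof.
move=> If; apply: (integ_le _ (integ_scale (-1)%R If)) => g.
by rewrite mulN1r; apply: maxp_le.
Qed.

Lemma Ex_repr f A B : (forall g, 0 <= A g)%R -> (forall g, 0 <= B g)%R ->
  integ A -> integ B -> (forall g, f g = A g - B g)%R -> Ex f = (Nn A - Nn B)%R.
Proof.
move=> A0 B0 IA IB fE.
have If : integ f.
  apply: (integ_le _ (integ_add IA IB)) => g; rewrite fE.
  by rewrite (le_trans (ler_normB _ _)) // [X in (_ <= X)%R]ger0_norm ?addr_ge0 // !ger0_norm.
have E : (fun g => Num.max (f g) 0%R + B g)%R = (fun g => Num.max (- f g)%R 0%R + A g)%R.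
  apply: funext => g; have := maxpn (f g); rewrite fE; lra.
have := congr1 Nn E.
have H1 := @Nn_add (fun g => Num.max (f g) 0%R) B (fun g => maxp_ge0 _) B0 (integ_pos If) IB.
have H2 := @Nn_add (fun g => Num.max (- f g)%R 0%R) A (fun g => maxp_ge0 _) A0 (integ_neg If) IA.
rewrite H1 H2 /Ex; lra.
Qed.

Lemma Nn0 : Nn (fun _ => 0%R) = 0%R.
Proof. exact: Nn_cst. Qed.

Lemma Ex_nonneg f : (forall g, 0 <= f g)%R -> integ f -> Ex f = Nn f.
Proof.
move=> f0 If; rewrite (@Ex_repr f f (fun _ => 0%R)) //.
- by rewrite Nn0 subr0.
- exact: integ_cst.
- by move=> g; rewrite subr0.
Qed.

Lemma Ex_add f h : integ f -> integ h -> Ex (fun g => f g + h g)%R = (Ex f + Ex h)%R.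
Proof.
move=> If Ih.
have H1 := @Nn_add (fun g => Num.max (f g) 0%R) (fun g => Num.max (h g) 0%R)
  (fun g => maxp_ge0 _) (fun g => maxp_ge0 _) (integ_pos If) (integ_pos Ih).
have H2 := @Nn_add (fun g => Num.max (- f g)%R 0%R) (fun g => Num.max (- h g)%R 0%R)
  (fun g => maxp_ge0 _) (fun g => maxp_ge0 _) (integ_neg If) (integ_neg Ih).
rewrite (@Ex_repr _ (fun g => Num.max (f g) 0%R + Num.max (h g) 0%R)%R
                    (fun g => Num.max (- f g)%R 0%R + Num.max (- h g)%R 0%R)%R).
- rewrite H1 H2 /Ex; lra.
- by move=> g; rewrite addr_ge0 // ?maxp_ge0.
- by move=> g; rewrite addr_ge0 // ?maxp_ge0.
- exact: integ_add (integ_pos If) (integ_pos Ih).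
- exact: integ_add (integ_neg If) (integ_neg Ih).
- by move=> g; have := maxpn (f g); have := maxpn (h g); lra.
Qed.

Lemma Ex_scale c f : integ f -> Ex (fun g => c * f g)%R = (c * Ex f)%R.
Proof.
move=> If; have [c0|c0] := leP 0%R c.
  have H1 := @Nn_scale c (fun g => Num.max (f g) 0%R) c0 (fun g => maxp_ge0 _) (integ_pos If).
  have H2 := @Nn_scale c (fun g => Num.max (- f g)%R 0%R) c0 (fun g => maxp_ge0 _) (integ_neg If).
  rewrite (@Ex_repr _ (fun g => c * Num.max (f g) 0%R)%R (fun g => c * Num.max (- f g)%R 0%R)%R).
  - rewrite H1 H2 /Ex; lra.
  - by move=> g; rewrite mulr_ge0 // ?maxp_ge0.
  - by move=> g; rewrite mulr_ge0 // ?maxp_ge0.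
  - exact: integ_scale (integ_pos If).
  - exact: integ_scale (integ_neg If).
  - by move=> g; rewrite -mulrBr maxpn.
have c0' : (0 <= - c)%R by rewrite oppr_ge0 ltW.
have H1 := @Nn_scale (- c)%R (fun g => Num.max (f g) 0%R) c0' (fun g => maxp_ge0 _) (integ_pos If).
have H2 := @Nn_scale (- c)%R (fun g => Num.max (- f g)%R 0%R) c0' (fun g => maxp_ge0 _) (integ_neg If).
rewrite (@Ex_repr _ (fun g => - c * Num.max (- f g)%R 0%R)%R (fun g => - c * Num.max (f g) 0%R)%R).
- rewrite H1 H2 /Ex; lra.
- by move=> g; rewrite mulr_ge0 // ?maxp_ge0.
- by move=> g; rewrite mulr_ge0 // ?maxp_ge0.
- exact: integ_scale (integ_neg If).
- exact: integ_scale (integ_pos If).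
- by move=> g; have := maxpn (f g); nra.
Qed.

Lemma Ex_cst c : Ex (fun _ => c) = c.
Proof.
rewrite (@Ex_repr _ (fun _ => Num.max c 0%R) (fun _ => Num.max (- c)%R 0%R)).
- by rewrite !Nn_cst ?maxp_ge0 // maxpn.
- by move=> g; exact: maxp_ge0.
- by move=> g; exact: maxp_ge0.
- exact: integ_cst.
- exact: integ_cst.
- by move=> g; rewrite maxpn.
Qed.

Lemma Ex_le f h : integ f -> integ h -> (forall g, f g <= h g)%R -> (Ex f <= Ex h)%R.
Proof.
move=> If Ih fh.
have Ihf : integ (fun g => h g + (-1) * f g)%R by apply: integ_add => //; exact: integ_scale.
have H0 : forall g, (0 <= h g + -1 * f g)%R by move=> g; have := fh g; lra.
have H1 := @Ex_nonneg _ H0 Ihf.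
have H2 := @Nn_ge0 _ H0.
have H3 := @Ex_add h (fun g => -1 * f g)%R Ih (integ_scale (-1)%R If).
have H4 := @Ex_scale (-1)%R f If.
lra.
Qed.

Lemma rexp_Ex f : integ f -> rexp mu f = (Ex f)%:E.
Proof.
move=> If; rewrite /rexp.
rewrite (@pexp_fin (fun g => Num.max (f g) 0%R) (fun g => maxp_ge0 _) (integ_pos If)).
rewrite (@pexp_fin (fun g => Num.max (- f g)%R 0%R) (fun g => maxp_ge0 _) (integ_neg If)).
by rewrite -EFinB.
Qed.

Lemma pexp_Ex f : (forall g, 0 <= f g)%R -> integ f -> pexp mu (fun g => (f g)%:E) = (Ex f)%:E.
Proof. by move=> f0 If; rewrite pexp_fin // Ex_nonneg. Qed.


Local Close Scope ereal_scope.

Hypothesis dm : is_metric d.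
Local Notation S := (horo_compact d o).

Lemma d_ge0 x y : 0 <= d x y. Proof. by case: dm. Qed.
Lemma d_sym x y : d x y = d y x. Proof. by case: dm => _ [_ []]. Qed.
Lemma d_tri x y z : d x z <= d x y + d y z. Proof. by case: dm => _ [_ [_]]. Qed.
Lemma d_refl x : d x x = 0. Proof. by case: dm => _ [H _]; apply/H. Qed.

Lemma small0 (a : R) : (forall e, 0 < e -> `|a| < e) -> a = 0.
Proof.
move=> H; apply/eqP; apply: contraT => a0.
have := H `|a|; rewrite normr_gt0 a0 => /(_ isT); by rewrite ltxx.
Qed.

Lemma small_le (a b : R) : (forall e, 0 < e -> a < b + e) -> a <= b.
Proof.
move=> H; rewrite leNgt; apply/negP => ba.
have := H (a - b); rewrite subr_gt0 => /(_ ba); lra.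
Qed.

Lemma S_horo x : S (horo d o x).
Proof. by move=> F e _ e0; exists x => m _; rewrite subrr normr0. Qed.

Lemma S_o {xi} : S xi -> xi o = 0.
Proof.
move=> Sxi; apply: small0 => e e0.
have [x Hx] := Sxi [set o] e (finite_set1 o) e0.
by have := Hx o erefl; rewrite /horo subrr subr0.
Qed.

Lemma horo_lip x m : `|horo d o x m| <= d m o.
Proof.
rewrite /horo ler_norml; apply/andP; split.
- have := d_tri x m o; rewrite (d_sym m o); lra.
- have := d_tri x o m; rewrite (d_sym o m); lra.
Qed.

Lemma S_lip {xi} m : S xi -> `|xi m| <= d m o.
Proof.
move=> Sxi; apply: small_le => e e0.
have [x Hx] := Sxi [set m] e (finite_set1 m) e0.
have h1 := Hx m erefl. have h2 := horo_lip x m.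
have := ler_normD (xi m - horo d o x m) (horo d o x m).
rewrite subrK; lra.
Qed.

Lemma S_act (g : isom d) xi : S xi -> S (horo_act o g xi).
Proof.
move=> Sxi F e finF e0.
have fin' : finite_set ((Defs.iinv g @` F) `|` [set Defs.iinv g o]).
  by rewrite finite_setU; split; [exact: finite_image|exact: finite_set1].
have e2 : 0 < e / 2 by rewrite divr_gt0.
have [x0 Hx] := Sxi _ _ fin' e2.
exists (ifun g x0) => m Fm.
have dd : forall y, d (ifun g x0) y = d x0 (Defs.iinv g y).
  by move=> y; rewrite -{1}(iinvK g y) ifun_dist.
have h1 := Hx (Defs.iinv g m) (or_introl (ex_intro2 _ _ m Fm erefl)).
have h2 := Hx (Defs.iinv g o) (or_intror erefl).
rewrite /horo_act /horo !dd.
rewrite /horo in h1 h2.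
set u := xi (Defs.iinv g m) - (d x0 (Defs.iinv g m) - d x0 o) in h1.
set v := xi (Defs.iinv g o) - (d x0 (Defs.iinv g o) - d x0 o) in h2.
have -> : xi (Defs.iinv g m) - xi (Defs.iinv g o) - (d x0 (Defs.iinv g m) - d x0 (Defs.iinv g o)) = u - v.
  by rewrite /u /v; ring.
have := ler_normB u v; lra.
Qed.

Lemma kappa_ge0 (g : isom d) : 0 <= kappa o g.
Proof. exact: d_ge0. Qed.

Lemma busemann_le (g : isom d) xi : S xi -> `|busemann o g xi| <= kappa o g.
Proof.
move=> Sxi; rewrite /busemann /kappa.
apply: (le_trans (S_lip (Defs.iinv g o) Sxi)).
by rewrite -(ifun_dist g) iinvK d_sym.
Qed.

Lemma busemann_mul (g h : isom d) xi :
  busemann o (isom_mul g h) xi = busemann o h xi + busemann o g (horo_act o h xi).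
Proof. by rewrite /busemann /horo_act /=; ring. Qed.

Lemma horo_act_mul (g h : isom d) xi :
  horo_act o (isom_mul g h) xi = horo_act o g (horo_act o h xi).
Proof. by apply: funext => m; rewrite /horo_act /=; ring. Qed.

Lemma horo_act_id xi : S xi -> horo_act o (isom_id d) xi = xi.
Proof. by move=> Sxi; apply: funext => m; rewrite /horo_act /= (S_o Sxi) subr0. Qed.

Lemma busemann_id xi : S xi -> busemann o (isom_id d) xi = 0.
Proof. by move=> Sxi; rewrite /busemann /= (S_o Sxi). Qed.


Local Open Scope ereal_scope.
Lemma rw_le n f f' : (forall h, f h <= f' h) -> rw_exp mu n f <= rw_exp mu n f'.
Proof.
elim: n f f' => [|n IH] f f' H /=; first exact: H.
by apply: IH => h; apply: pexp_le => g; exact: H.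
Qed.

Lemma rw_scale n (c : R) f : (0 <= c)%R -> (forall h, 0 <= f h) ->
  rw_exp mu n (fun h => c%:E * f h) = c%:E * rw_exp mu n f.
Proof.
move=> c0; elim: n f => [|n IH] f f0 //=.
rewrite -IH; last by move=> h; apply: pexp_ge0 => g; exact: f0.
congr (rw_exp mu n _); apply: funext => h.
by rewrite pexpZ // => g; exact: f0.
Qed.
Local Close Scope ereal_scope.

Variables (l : R) (psi : (X -> R) -> R) (alpha M : R).
Hypothesis alpha0 : 0 < alpha.
Hypothesis Gfin : (pexp mu (fun g => (expR (alpha * kappa o g))%:E) < +oo)%E.
Hypothesis HM : forall h, S h -> `|psi h| <= M.
Hypothesis hmean : forall x, S x -> rexp mu (fun g => sigma0 o psi g x) = l%:E.

Let K := 2 * M + `|l|.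
Let G (g : isom d) := expR (alpha * kappa o g).
Let Dfun xi (g : isom d) := sigma0 o psi g xi - l.
Let Hf (g : isom d) := (kappa o g + K) ^+ 3 * expR (alpha / 2 * (kappa o g + K)).

Lemma M_ge0 : 0 <= M.
Proof. exact: le_trans (normr_ge0 _) (HM _ (S_horo o)). Qed.

Lemma K_ge0 : 0 <= K.
Proof. by rewrite /K addr_ge0 ?mulr_ge0 ?M_ge0. Qed.

Lemma integG : integ G.
Proof.
rewrite /integ (_ : (fun g => (`|G g|)%:E) = (fun g => (expR (alpha * kappa o g))%:E)) //.
by apply: funext => g; rewrite ger0_norm // expR_ge0.
Qed.

Lemma integ_dom f a b : 0 <= a -> 0 <= b -> (forall g, `|f g| <= a + b * G g) -> integ f.
Proof.
move=> a0 b0 H.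
apply: (integ_le _ (integ_add (integ_cst a) (integ_scale b integG))) => g /=.
by rewrite [X in _ <= X]ger0_norm ?addr_ge0 ?mulr_ge0 ?expR_ge0.
Qed.

Lemma D_bound xi g : S xi -> `|Dfun xi g| <= kappa o g + K.
Proof.
move=> Sxi; rewrite /Dfun /sigma0 /K.
have h1 := @busemann_le g xi Sxi. have h2 := HM _ (@S_act g xi Sxi). have h3 := HM _ Sxi.
have hl1 := ler_norm l. have hl2 := ler_norm (- l). rewrite normrN in hl2.
move: h1 h2 h3; rewrite !ler_norml => /andP[h1 h1'] /andP[h2 h2'] /andP[h3 h3'].
apply/andP; split; lra.
Qed.

Lemma kappa_le_G g : kappa o g <= G g / alpha.
Proof.
rewrite ler_pdivlMr //; have := expR_ge1Dx (alpha * kappa o g); rewrite /G; lra.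
Qed.

Lemma kappa2_le_G g : kappa o g ^+ 2 <= 2 / alpha ^+ 2 * G g.
Proof.
have k0 := kappa_ge0 g.
have := @expR_ge1Dxn R (alpha * kappa o g) 1 (mulr_ge0 (ltW alpha0) k0).
rewrite -/(G g) (_ : (2`!)%:R = 2 :> R) // exprMn => h.
have a2 : 0 < alpha ^+ 2 by rewrite exprn_gt0.
rewrite -(@ler_pM2r _ (alpha ^+ 2)) //.
have -> : 2 / alpha ^+ 2 * G g * alpha ^+ 2 = 2 * G g by field; rewrite gt_eqF.
have := @mulr_ge0 _ (alpha ^+ 2) (kappa o g ^+ 2) (ltW a2) (sqr_ge0 _).
nra.
Qed.

Let cH := 48 / alpha ^+ 3 * expR (alpha * K).

Lemma Hf_ge0 g : 0 <= Hf g.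
Proof. by rewrite /Hf mulr_ge0 ?expR_ge0 // exprn_ge0 // addr_ge0 ?kappa_ge0 ?K_ge0. Qed.

Lemma Hf_le g : Hf g <= cH * G g.
Proof.
set u := kappa o g + K.
have u0 : 0 <= u by rewrite addr_ge0 ?kappa_ge0 ?K_ge0.
set x := alpha / 2 * u.
have x0 : 0 <= x by rewrite mulr_ge0 // divr_ge0 // ltW.
have hx := @expR_ge1Dxn R x 2 x0.
rewrite (_ : (3`!)%:R = 6 :> R) // in hx.
have hu : u ^+ 3 = 8 / alpha ^+ 3 * x ^+ 3.
  by rewrite /x exprMn; field; rewrite gt_eqF.
have hu3 : u ^+ 3 <= 48 / alpha ^+ 3 * expR x.
  rewrite hu (_ : 48 / alpha ^+ 3 * expR x = 8 / alpha ^+ 3 * (6 * expR x)); last by field; rewrite gt_eqF.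
  apply: ler_wpM2l; first by rewrite divr_ge0 // exprn_ge0 // ltW.
  lra.
rewrite /Hf -/u -/x /cH /G -mulrA.
have -> : expR (alpha * K) * expR (alpha * kappa o g) = expR x * expR x.
  by rewrite -!expRD; congr expR; rewrite /x /u; field.
rewrite mulrA; apply: ler_wpM2r; first exact: expR_ge0.
exact: hu3.
Qed.

Lemma integ_D {xi} : S xi -> integ (Dfun xi).
Proof.
move=> Sxi; apply: (@integ_dom _ K (1 / alpha)); [exact: K_ge0|by rewrite divr_ge0 // ltW|].
move=> g; have := @D_bound xi g Sxi; have := kappa_le_G g; rewrite mul1r mulrC; lra.
Qed.

Lemma integ_D2 {xi} : S xi -> integ (fun g => Dfun xi g ^+ 2).
Proof.
move=> Sxi; apply: (@integ_dom _ (2 * K ^+ 2) (4 / alpha ^+ 2)).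
- by rewrite mulr_ge0 // sqr_ge0.
- by rewrite divr_ge0 // exprn_ge0 // ltW.
move=> g; have hD := @D_bound xi g Sxi; have hk := kappa2_le_G g.
have k0 := kappa_ge0 g. have K0 := K_ge0.
rewrite ger0_norm ?sqr_ge0 //.
have h1 : Dfun xi g ^+ 2 <= (kappa o g + K) ^+ 2.
  rewrite -real_normK ?num_real // lerXn2r // nnegrE ?normr_ge0 // addr_ge0 //.
have -> : 4 / alpha ^+ 2 * G g = 2 * (2 / alpha ^+ 2 * G g) by ring.
have h2 : (kappa o g + K) ^+ 2 <= 2 * kappa o g ^+ 2 + 2 * K ^+ 2.
  have := sqr_ge0 (kappa o g - K).
  have -> : (kappa o g - K) ^+ 2 = 2 * kappa o g ^+ 2 + 2 * K ^+ 2 - (kappa o g + K) ^+ 2 by ring.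
  lra.
lra.
Qed.

Lemma integ_sigma {xi} : S xi -> integ (fun g => sigma0 o psi g xi).
Proof.
move=> Sxi; apply: (@integ_dom _ (K + `|l|) (1 / alpha)).
- by rewrite addr_ge0 ?K_ge0.
- by rewrite divr_ge0 // ltW.
move=> g; have := @D_bound xi g Sxi; have := kappa_le_G g; rewrite mul1r mulrC /Dfun.
have := ler_normD (sigma0 o psi g xi - l) l; rewrite subrK; lra.
Qed.

Lemma integ_Hf : integ Hf.
Proof.
apply: (@integ_dom _ 0 cH) => //.
  by rewrite /cH mulr_ge0 ?expR_ge0 // divr_ge0 // exprn_ge0 // ltW.
by move=> g; rewrite add0r ger0_norm ?Hf_ge0 // Hf_le.
Qed.

Lemma integ_expD {xi lam} : S xi -> `|lam| <= alpha / 2 ->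
  integ (fun g => expR (lam * Dfun xi g)).
Proof.
move=> Sxi hl; apply: (@integ_dom _ 0 (expR (alpha * K))) => //; try exact: expR_ge0.
move=> g; rewrite add0r ger0_norm ?expR_ge0 // /G -expRD ler_expR.
have hD := @D_bound xi g Sxi. have k0 := kappa_ge0 g. have K0 := K_ge0.
have h1 : lam * Dfun xi g <= `|lam| * `|Dfun xi g|.
  by rewrite -normrM ler_norm.
have h2 : `|lam| * `|Dfun xi g| <= alpha / 2 * (kappa o g + K).
  by apply: ler_pM => //; exact: normr_ge0.
have a0 := alpha0.
nra.
Qed.

Lemma taylor_pt xi lam g : S xi -> `|lam| <= alpha / 2 ->
  expR (lam * Dfun xi g) <=
  1 + lam * Dfun xi g + lam ^+ 2 / 2 * Dfun xi g ^+ 2 + `|lam| ^+ 3 / 2 * Hf g.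
Proof.
move=> Sxi hl.
have hD := @D_bound xi g Sxi.
have u0 : 0 <= kappa o g + K by rewrite addr_ge0 ?kappa_ge0 ?K_ge0.
apply: le_trans (@expR_taylor R (lam * Dfun xi g)) _.
have e1 : (lam * Dfun xi g) ^+ 2 / 2 = lam ^+ 2 / 2 * Dfun xi g ^+ 2.
  by rewrite exprMn; field.
have hA : `|Dfun xi g| ^+ 3 <= (kappa o g + K) ^+ 3.
  by rewrite lerXn2r // nnegrE ?normr_ge0.
have hB : expR (`|lam| * `|Dfun xi g|) <= expR (alpha / 2 * (kappa o g + K)).
  by rewrite ler_expR; apply: ler_pM => //; exact: normr_ge0.
have h3 : `|Dfun xi g| ^+ 3 * expR (`|lam| * `|Dfun xi g|) <= Hf g.
  by apply: ler_pM => //; rewrite ?exprn_ge0 ?expR_ge0 ?normr_ge0.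
have e2 : `|lam * Dfun xi g| ^+ 3 * expR `|lam * Dfun xi g| / 2 <= `|lam| ^+ 3 / 2 * Hf g.
  rewrite normrM exprMn.
  have -> : `|lam| ^+ 3 * `|Dfun xi g| ^+ 3 * expR (`|lam| * `|Dfun xi g|) / 2 =
    `|lam| ^+ 3 / 2 * (`|Dfun xi g| ^+ 3 * expR (`|lam| * `|Dfun xi g|)) by field.
  by apply: ler_wpM2l => //; rewrite divr_ge0 // exprn_ge0.
lra.
Qed.

Lemma Ex_D0 {xi} : S xi -> Ex (Dfun xi) = 0.
Proof.
move=> Sxi.
have Is := integ_sigma Sxi.
have Es : Ex (fun g => sigma0 o psi g xi) = l.
  by apply: EFin_inj; rewrite -rexp_Ex // hmean.
have := @Ex_add (fun g => sigma0 o psi g xi) (fun _ => - l) Is (integ_cst _).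
rewrite Ex_cst Es subrr /Dfun; cbv beta; by [].
Qed.

Lemma step xi lam v eps : S xi -> `|lam| <= alpha / 2 -> `|lam| * Ex Hf <= eps ->
  Ex (fun g => Dfun xi g ^+ 2) <= v ->
  (pexp mu (fun g => (expR (lam * Dfun xi g))%:E) <= (expR (lam ^+ 2 * (v + eps) / 2))%:E)%E.
Proof.
move=> Sxi hl hH hv.
have ID := integ_D Sxi. have ID2 := integ_D2 Sxi. have IH := integ_Hf.
have IE := integ_expD Sxi hl.
rewrite (@pexp_Ex (fun g => expR (lam * Dfun xi g)) (fun g => expR_ge0 _) IE) lee_fin.
have I1 : integ (fun g => 1 + lam * Dfun xi g) := integ_add (integ_cst 1) (integ_scale lam ID).
have I2 : integ (fun g => 1 + lam * Dfun xi g + lam ^+ 2 / 2 * Dfun xi g ^+ 2) :=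
  integ_add I1 (integ_scale _ ID2).
have I3 : integ (fun g => 1 + lam * Dfun xi g + lam ^+ 2 / 2 * Dfun xi g ^+ 2
                         + `|lam| ^+ 3 / 2 * Hf g) := integ_add I2 (integ_scale _ IH).
have L := @Ex_le _ _ IE I3 (fun g => @taylor_pt xi lam g Sxi hl).
have E3 := @Ex_add (fun g => 1 + lam * Dfun xi g + lam ^+ 2 / 2 * Dfun xi g ^+ 2)
  (fun g => `|lam| ^+ 3 / 2 * Hf g) I2 (integ_scale _ IH).
have E2 := @Ex_add (fun g => 1 + lam * Dfun xi g) (fun g => lam ^+ 2 / 2 * Dfun xi g ^+ 2)
  I1 (integ_scale _ ID2).
have E1 := @Ex_add (fun _ => 1) (fun g => lam * Dfun xi g) (integ_cst 1) (integ_scale lam ID).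
have S1 := @Ex_scale lam _ ID.
have S2 := @Ex_scale (lam ^+ 2 / 2) _ ID2.
have S3 := @Ex_scale (`|lam| ^+ 3 / 2) _ IH.
have C1 := Ex_cst 1.
have D0 := Ex_D0 Sxi.
have EH0 : 0 <= Ex Hf by rewrite Ex_nonneg //; [exact: Nn_ge0 Hf_ge0|exact: Hf_ge0].
move: E1 E2 E3 S1 S2 S3 L; cbv beta => E1 E2 E3 S1 S2 S3 L.
have X1 := expR_ge1Dx (lam ^+ 2 * (v + eps) / 2).
have l3 : `|lam| ^+ 3 = lam ^+ 2 * `|lam|.
  by rewrite exprS real_normK ?num_real // mulrC.
have l2 : 0 <= lam ^+ 2 / 2 by rewrite divr_ge0 // sqr_ge0.
have P1 : lam ^+ 2 / 2 * Ex (fun g => Dfun xi g ^+ 2) <= lam ^+ 2 / 2 * v := ler_wpM2l l2 hv.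
have P2 : lam ^+ 2 / 2 * (`|lam| * Ex Hf) <= lam ^+ 2 / 2 * eps := ler_wpM2l l2 hH.
have P3 : `|lam| ^+ 3 / 2 * Ex Hf = lam ^+ 2 / 2 * (`|lam| * Ex Hf) by rewrite l3; field.
have P4 : lam ^+ 2 * (v + eps) / 2 = lam ^+ 2 / 2 * v + lam ^+ 2 / 2 * eps by field.
rewrite D0 mulr0 in S1.
lra.
Qed.

Let Z x n (g : isom d) := busemann o g x + psi (horo_act o g x) - psi x - n%:R * l.

Lemma Z_step x n g h : Z x n.+1 (isom_mul g h) = Z x n h + Dfun (horo_act o h x) g.
Proof.
rewrite /Z /Dfun /sigma0 busemann_mul horo_act_mul -natr1; ring.
Qed.

Local Open Scope ereal_scope.
Lemma Z_main x lam q n : S x ->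
  (forall xi, S xi -> pexp mu (fun g => (expR (lam * Dfun xi g))%:E) <= (expR q)%:E) ->
  rw_exp mu n (fun g => (expR (lam * Z x n g))%:E) <= (expR (n%:R * q))%:E.
Proof.
move=> Sx hs; elim: n => [|n IH].
  rewrite /= /Z busemann_id // horo_act_id //.
  rewrite (_ : (lam * (0 + psi x - psi x - 0%:R * l))%R = 0%R); last by ring.
  by rewrite mul0r expR0.
rewrite /=.
apply: le_trans (@rw_le n _ (fun h => (expR q)%:E * (expR (lam * Z x n h))%:E) _) _.
  move=> h.
  rewrite (_ : (fun g => (expR (lam * Z x n.+1 (isom_mul g h)))%:E) =
     (fun g => (expR (lam * Z x n h))%:E * (expR (lam * Dfun (horo_act o h x) g))%:E)); last first.
    by apply: funext => g; rewrite Z_step mulrDr expRD EFinM.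
  rewrite pexpZ ?expR_ge0 //; try by move=> g; rewrite lee_fin expR_ge0.
  rewrite muleC; apply: lee_wpmul2r; first by rewrite lee_fin expR_ge0.
  exact: hs (@S_act h x Sx).
rewrite rw_scale ?expR_ge0 //; try by move=> h; rewrite lee_fin expR_ge0.
apply: le_trans (lee_wpmul2l _ IH) _; first by rewrite lee_fin expR_ge0.
by rewrite -EFinM -expRD lee_fin -natr1 mulrDl mul1r addrC.
Qed.

Lemma final_bound x lam n q : S x ->
  (forall xi, S xi -> pexp mu (fun g => (expR (lam * Dfun xi g))%:E) <= (expR q)%:E) ->
  rw_exp mu n (fun g => (expR (lam * (busemann o g x - n%:R * l)))%:E)
    <= (expR (n%:R * q + 2 * M * `|lam|))%:E.
Proof.
move=> Sx hs.
apply: le_trans (@rw_le n _ (fun g => (expR (2 * M * `|lam|))%:E * (expR (lam * Z x n g))%:E) _) _.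
  move=> g; rewrite -EFinM -expRD lee_fin ler_expR /Z.
  have h1 := HM _ (@S_act g x Sx). have h2 := HM _ Sx.
  have hw : (`|psi (horo_act o g x) - psi x| <= 2 * M)%R.
    by apply: le_trans (ler_normB _ _) _; lra.
  have h3 : (- (lam * (psi (horo_act o g x) - psi x)) <= `|lam| * `|psi (horo_act o g x) - psi x|)%R.
    by rewrite -normrM -normrN ler_norm.
  have h4 : (`|lam| * `|psi (horo_act o g x) - psi x| <= `|lam| * (2 * M))%R.
    by apply: ler_wpM2l => //; exact: normr_ge0.
  lra.
rewrite rw_scale ?expR_ge0 //; try by move=> h; rewrite lee_fin expR_ge0.
apply: le_trans (lee_wpmul2l _ (@Z_main x lam q n Sx hs)) _; first by rewrite lee_fin expR_ge0.
by rewrite -EFinM -expRD lee_fin addrC.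
Qed.
Local Close Scope ereal_scope.

Lemma D2_le xi g : S xi -> Dfun xi g ^+ 2 <= 2 * K ^+ 2 + 4 / alpha ^+ 2 * G g.
Proof.
move=> Sxi; have hD := @D_bound xi g Sxi; have hk := kappa2_le_G g.
have k0 := kappa_ge0 g. have K0 := K_ge0.
have h1 : Dfun xi g ^+ 2 <= (kappa o g + K) ^+ 2.
  rewrite -real_normK ?num_real // lerXn2r // nnegrE ?normr_ge0 // addr_ge0 //.
have -> : 4 / alpha ^+ 2 * G g = 2 * (2 / alpha ^+ 2 * G g) by ring.
have h2 : (kappa o g + K) ^+ 2 <= 2 * kappa o g ^+ 2 + 2 * K ^+ 2.
  have := sqr_ge0 (kappa o g - K).
  have -> : (kappa o g - K) ^+ 2 = 2 * kappa o g ^+ 2 + 2 * K ^+ 2 - (kappa o g + K) ^+ 2 by ring.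
  lra.
lra.
Qed.

Lemma pack : exists C : R, 0 < C /\
    forall eps : R, 0 < eps ->
      exists b : R, 0 < b /\
        forall (lam : R) (n : nat) (x : X -> R),
          (`|lam|%:E < vmu o mu psi l * (b^-1)%:E)%E ->
          horo_compact d o x ->
          (rw_exp mu n (fun g => (expR (lam * (busemann o g x - n%:R * l)))%:E)
            <= (expR (lam ^+ 2 * (fine (vmu o mu psi l) + eps) * n%:R / 2
                      + C * `|lam|))%:E)%E.
Proof.
pose B2 := fun g : isom d => 2 * K ^+ 2 + 4 / alpha ^+ 2 * G g.
have IB2 : integ B2 := integ_add (integ_cst _) (integ_scale _ integG).
have Pxi : forall xi, S xi -> pexp mu (fun g => ((sigma0 o psi g xi - l) ^+ 2)%:E)
    = (Ex (fun g => Dfun xi g ^+ 2))%:E.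
  by move=> xi Sxi; exact: (@pexp_Ex (fun g => Dfun xi g ^+ 2) (fun g => sqr_ge0 _) (integ_D2 Sxi)).
have vle : (vmu o mu psi l <= (Ex B2)%:E)%E.
  rewrite /vmu; apply: ge_ereal_sup => _ [xi Sxi <-].
  rewrite Pxi // lee_fin; apply: Ex_le => //; first exact: integ_D2.
  by move=> g; exact: D2_le.
have v0 : (0 <= vmu o mu psi l)%E.
  apply: (@le_trans _ _ (pexp mu (fun g => ((sigma0 o psi g (horo d o o) - l) ^+ 2)%:E))).
    by apply: pexp_ge0 => g; rewrite lee_fin sqr_ge0.
  by apply: ereal_sup_ubound; exists (horo d o o) => //; exact: S_horo.
have vfin : vmu o mu psi l \is a fin_num.
  by rewrite ge0_fin_numE // (le_lt_trans vle) // ltry.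
set v := fine (vmu o mu psi l).
have vE : vmu o mu psi l = v%:E by rewrite /v fineK.
have v0r : 0 <= v by rewrite /v fine_ge0.
have hv : forall xi, S xi -> Ex (fun g => Dfun xi g ^+ 2) <= v.
  move=> xi Sxi; rewrite -lee_fin -vE -Pxi //.
  by apply: ereal_sup_ubound; exists xi.
exists (2 * M + 1); split; first by have := M_ge0; lra.
move=> eps e0.
set EH := Ex Hf.
have EH0 : 0 <= EH by rewrite /EH (@Ex_nonneg Hf Hf_ge0 integ_Hf); exact: Nn_ge0 Hf_ge0.
set lam0 := Num.min (alpha / 2) (eps / (EH + 1)).
have lam0p : 0 < lam0.
  by rewrite /lam0 lt_min divr_gt0 //= divr_gt0 // ltr_wpDl.
exists ((v + 1) / lam0); split.
  by rewrite divr_gt0 // ltr_wpDl.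
move=> lam n x hlam Sx.
rewrite vE -EFinM lte_fin in hlam.
have hl0 : `|lam| <= lam0.
  have : v * ((v + 1) / lam0)^-1 <= lam0.
    rewrite invf_div mulrA ler_pdivrMr; last by rewrite ltr_wpDl.
    nra.
  lra.
move: hl0; rewrite le_min => /andP[hl1 hl2].
have hH : `|lam| * EH <= eps.
  move: hl2; rewrite ler_pdivlMr; last by rewrite ltr_wpDl.
  have := normr_ge0 lam; nra.
have hs := fun xi Sxi => @step xi lam v eps Sxi hl1 hH (hv xi Sxi).
apply: le_trans (@final_bound x lam n _ Sx hs) _.
rewrite lee_fin ler_expR.
have -> : n%:R * (lam ^+ 2 * (v + eps) / 2) = lam ^+ 2 * (v + eps) * n%:R / 2 by ring.
have := normr_ge0 lam; lra.
Qed.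

End Main.

Theorem proposition4p4 (R : realType) (X : Type) (d : X -> X -> R) (o : X)
  (mu : isom d -> R) (l : R) (psi : (X -> R) -> R) :
  is_metric d -> separable_metric d -> geodesic_metric d -> gromov_hyperbolic d o ->
  countably_supported_proba mu -> non_elementary o mu -> finite_exp_moment o mu ->
  is_drift o mu l ->
  (exists M : R, forall h, horo_compact d o h -> `|psi h| <= M) ->
  (forall x, horo_compact d o x -> rexp mu (fun g => sigma0 o psi g x) = l%:E) ->
  exists C : R, 0 < C /\
    forall eps : R, 0 < eps ->
      exists b : R, 0 < b /\
        forall (lam : R) (n : nat) (x : X -> R),
          (`|lam|%:E < vmu o mu psi l * (b^-1)%:E)%E ->
          horo_compact d o x ->
          (rw_exp mu n (fun g => (expR (lam * (busemann o g x - n%:R * l)))%:E)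
            <= (expR (lam ^+ 2 * (fine (vmu o mu psi l) + eps) * n%:R / 2
                      + C * `|lam|))%:E)%E.
Proof.
move=> dm _ _ _ [mu0 [_ mu1]] _ [alpha [a0 Gfin]] _ [M HM] hmean.
exact: (@pack R X d o mu mu0 mu1 dm l psi alpha M a0 Gfin HM hmean).
Qed.
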